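(* Let $V,W$ be finite-dimensional vector spaces over $\mathbb{F}_q$, and let $\varphi_V:\mathbb{F}_q^\nu\to V$, $\varphi_W:\mathbb{F}_q^\nu\to W$ be parent functions of spanning projective point families $\mathcal{F}_V\subset V$, $\mathcal{F}_W\subset W$ (each of size $\nu$), with parent codes $P_V=\ker\varphi_V$, $P_W=\ker\varphi_W$. Let $\mathcal{H}(P_V,P_W)$ be the set of linear Hamming isometries $\hat L$ of $\mathbb{F}_q^\nu$ with $\hat L(P_V)=P_W$, and $\mathrm{Isom}_{\mathcal{F}}(V,W)$ the set of projective isometries $(V,\operatorname{wt}_{\mathcal{F}_V})\to(W,\operatorname{wt}_{\mathcal{F}_W})$. Then: (a) for every $\hat L\in\mathcal{H}(P_V,P_W)$ there is a unique $L\in\mathrm{Isom}_{\mathcal{F}}(V,W)$ with $L\circ\varphi_V=\varphi_W\circ\hat L$, and the map $\Phi:\hat L\mapsto L$ is a bijection $\mathcal{H}(P_V,P_W)\to\mathrm{Isom}_{\mathcal{F}}(V,W)$; (b) $\Phi$ is compatible with composition: for three such spaces $U_1,U_2,U_3$ with parent functions and parent codes $P_1,P_2,P_3$, and $\hat L\in\mathcal{H}(P_1,P_2)$, $\hat T\in\mathcal{H}(P_2,P_3)$, one has $\Phi(\hat T\circ\hat L)=\Phi(\hat T)\circ\Phi(\hat L)$; (c) for any linear subspaces $\mathcal{D}_V\le V$, $\mathcal{D}_W\le W$, $\Phi$ restricts to a bijection from $\{\hat L\in\mathcal{H}(P_V,P_W):\hat L(\varphi_V^{-1}(\mathcal{D}_V))=\varphi_W^{-1}(\mathcal{D}_W)\}$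 onto $\{L\in\mathrm{Isom}_{\mathcal{F}}(V,W): L(\mathcal{D}_V)=\mathcal{D}_W\}$.
   Context: A spanning projective point family in $V$ is a set $\mathcal{F}$ of pairwise linearly independent nonzero vectors (distinct 1-dimensional subspaces) spanning $V$; its projective weight is $\operatorname{wt}_{\mathcal{F}}(x)=\min\{|I|:I\subseteq\mathcal{F},x\in\langle I\rangle\}$. A parent function of $\mathcal{F}$ with $|\mathcal{F}|=\nu$ is a linear map $\varphi:\mathbb{F}_q^\nu\to V$ with $\{\langle\varphi(e_i)\rangle\}_{i=1}^\nu=\mathcal{F}$ ($e_i$ standard basis vectors); $\ker\varphi$ is the parent code. A linear Hamming isometry of $\mathbb{F}_q^\nu$ is a linear bijection preserving Hamming weight. A projective isometry $V\to W$ is an invertible linear map $L$ with $\operatorname{wt}_{\mathcal{F}_W}(L(x))=\operatorname{wt}_{\mathcal{F}_V}(x)$ for all $x$. *)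

(* Defs.v *)
(* Finite-dimensional F_q-spaces are modelled as row spaces
   'rV[F]_n; linear maps as matrices acting on the right (x |-> x *m A). *)
From mathcomp Require Import all_boot all_order all_algebra.
Set Implicit Arguments. Unset Strict Implicit. Unset Printing Implicit Defensive.
Import GRing.Theory.
Local Open Scope ring_scope.

Section Defs.
Variable F : finFieldType.

Definition hweight (nu : nat) (x : 'rV[F]_nu) : nat := #|[set i | x ord0 i != 0]|.

Definition ppfamily (n : nat) (Fam : {set 'rV[F]_n}) : Prop :=
  [/\ 0 \notin Fam,
      {in Fam &, forall u v, u != v -> free [:: u; v]}
    & (<<enum Fam>>%VS = fullv)].

Definition pweight (n : nat) (Fam : {set 'rV[F]_n}) (x : 'rV[F]_n) : nat :=
  \big[minn/#|Fam|]_(I : {set 'rV[F]_n} | (I \subset Fam) && (x \in <<enum I>>%VS))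
    #|I|.

(* phi : F^nu -> V, phi(x) = x *m P, is a parent function of Fam (|Fam| = nu) *)
Definition parent_fun (nu n : nat) (Fam : {set 'rV[F]_n}) (P : 'M[F]_(nu, n))
  : Prop :=
  [/\ ppfamily Fam, #|Fam| = nu,
      (forall i : 'I_nu, exists2 v, v \in Fam & <[row i P]>%VS = <[v]>%VS)
    & (forall v, v \in Fam -> exists i : 'I_nu, <[row i P]>%VS = <[v]>%VS)].

Definition pcode (nu n : nat) (P : 'M[F]_(nu, n)) : {set 'rV[F]_nu} :=
  [set x | x *m P == 0].

Definition hamming_isom (nu : nat) (Lh : 'M[F]_nu) : bool :=
  (Lh \in unitmx) && [forall x : 'rV[F]_nu, hweight (x *m Lh) == hweight x].

Definition Hset (nu n m : nat) (PV : 'M[F]_(nu, n)) (PW : 'M[F]_(nu, m))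
  (Lh : 'M[F]_nu) : bool :=
  hamming_isom Lh && ((fun x => x *m Lh) @: pcode PV == pcode PW).

Definition proj_isom (n m : nat) (FamV : {set 'rV[F]_n}) (FamW : {set 'rV[F]_m})
  (L : 'M[F]_(n, m)) : bool :=
  [&& row_free L, row_full L &
      [forall x : 'rV[F]_n, pweight FamW (x *m L) == pweight FamV x]].

Definition Phi (nu n m : nat) (FamV : {set 'rV[F]_n}) (FamW : {set 'rV[F]_m})
  (PV : 'M[F]_(nu, n)) (PW : 'M[F]_(nu, m)) (Lh : 'M[F]_nu) : 'M[F]_(n, m) :=
  odflt 0 [pick L : 'M[F]_(n, m) | proj_isom FamV FamW L & PV *m L == Lh *m PW].

Definition parent_preim (nu n : nat) (P : 'M[F]_(nu, n)) (D : {vspace 'rV[F]_n})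
  : {set 'rV[F]_nu} := [set x | x *m P \in D].

Definition sub_image (n m : nat) (L : 'M[F]_(n, m)) (D : {vspace 'rV[F]_n})
  : {set 'rV[F]_m} := (fun x => x *m L) @: [set x | x \in D].

End Defs.

(* Main.v *)
Require Import Defs.
From mathcomp Require Import all_boot all_order all_algebra.
Set Implicit Arguments. Unset Strict Implicit. Unset Printing Implicit Defensive.
Import GRing.Theory.
Local Open Scope ring_scope.


Section H.
Variable F : finFieldType.

Lemma hw0 (nu : nat) : hweight (0 : 'rV[F]_nu) = 0%N.
Proof.
rewrite /hweight; apply/eqP; rewrite cards_eq0; apply/eqP/setP => k.
by rewrite !inE mxE eqxx.
Qed.

Lemma hw_eq0 (nu : nat) (z : 'rV[F]_nu) : hweight z = 0%N -> z = 0.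
Proof.
move=> /eqP; rewrite cards_eq0 => /eqP h; apply/rowP => k; rewrite mxE.
apply/eqP; apply: contraT => nz.
have: k \in [set i | z ord0 i != 0] by rewrite inE.
by rewrite h inE.
Qed.

Lemma hw_delta (nu : nat) (j : 'I_nu) : hweight ('e_j : 'rV[F]_nu) = 1%N.
Proof.
rewrite /hweight.
have -> : [set i | ('e_j : 'rV[F]_nu) ord0 i != 0] = [set j]; last by rewrite cards1.
apply/setP => k; rewrite !inE mxE eqxx /= eq_sym.
by case: (k == j); rewrite /= eq_sym ?oner_eq0 ?eqxx.
Qed.

Lemma hw_le1 (nu : nat) (z : 'rV[F]_nu) : (hweight z <= 1)%N ->
  z = 0 \/ exists j, z ord0 j != 0 /\ z = z ord0 j *: 'e_j.
Proof.
rewrite leq_eqVlt ltnS leqn0 => /orP[|/eqP/hw_eq0]; last by left.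
move=> /cards1P [j hj]; right; exists j.
have jin : j \in [set i | z ord0 i != 0] by rewrite hj inE.
rewrite inE in jin; split => //.
apply/rowP => k; rewrite !mxE /=.
case: eqP => [->|/eqP nkj]; first by rewrite mulr1.
rewrite mulr0.
apply/eqP; apply: contraT => nz.
have: k \in [set i | z ord0 i != 0] by rewrite inE.
by rewrite hj inE (negbTE nkj).
Qed.

Lemma hwD (nu : nat) (a b : 'rV[F]_nu) : (hweight (a + b) <= hweight a + hweight b)%N.
Proof.
rewrite /hweight; apply: leq_trans (leq_card_setU _ _).
apply: subset_leq_card; apply/subsetP => k; rewrite !inE mxE.
apply: contraR; rewrite negb_or !negbK => /andP[/eqP -> /eqP ->].
by rewrite addr0.
Qed.

Lemma hwZ (nu : nat) c (a : 'rV[F]_nu) : (hweight (c *: a) <= hweight a)%N.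
Proof.
rewrite /hweight; apply: subset_leq_card; apply/subsetP => k; rewrite !inE mxE.
by apply: contra => /eqP ->; rewrite mulr0.
Qed.

Lemma hw_sum (nu : nat) (I : Type) (r : seq I) (P : pred I) (G : I -> 'rV[F]_nu) :
  (hweight (\sum_(i <- r | P i) G i) <= \sum_(i <- r | P i) hweight (G i))%N.
Proof.
apply: (big_ind2 (fun a b => hweight a <= b)%N); first by rewrite hw0.
  move=> x1 x2 y1 y2 h1 h2; apply: leq_trans (hwD _ _) _; exact: leq_add.
by [].
Qed.

Lemma inj_row_free (p q : nat) (A : 'M[F]_(p, q)) :
  (forall z : 'rV_p, z *m A = 0 -> z = 0) -> row_free A.
Proof.
move=> h; rewrite -kermx_eq0; apply/eqP/row_matrixP => i; rewrite row0.
by apply: h; rewrite -row_mul mulmx_ker row0.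
Qed.

Lemma row_free_inj0 (p q : nat) (A : 'M[F]_(p, q)) (z : 'rV_p) :
  row_free A -> z *m A = 0 -> z = 0.
Proof. by move=> /row_free_inj h e; apply: h; rewrite e mul0mx. Qed.

End H.

Lemma fin_ex (T : finType) (U : Type) (Q : T -> U -> Prop) :
  (forall x, exists u, Q x u) -> exists f : T -> U, forall x, Q x (f x).
Proof. exact: (@fin_all_exists T (fun _ => U) Q). Qed.


Lemma mono_w (F : finFieldType) nu (M : 'M[F]_nu) (s : 'I_nu -> 'I_nu) (c : 'I_nu -> F) :
  injective s -> (forall i, c i != 0) -> (forall i, row i M = c i *: 'e_(s i)) ->
  forall x, hweight (x *m M) = hweight x.
Proof.
move=> inj cnz hM x.
have hMik : forall i k, M i k = c i * (s i == k)%:R.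
  move=> i k; have := congr1 (fun A : 'rV_nu => A ord0 k) (hM i).
  by rewrite /= !mxE => ->; rewrite eqxx /= eq_sym.
have entry : forall i, (x *m M) ord0 (s i) = x ord0 i * c i.
  move=> i; rewrite mxE (bigD1 i) //= big1 ?addr0.
    by rewrite hMik eqxx mulr1.
  by move=> j nji; rewrite hMik (inj_eq inj) (negbTE nji) mulr0 mulr0.
rewrite /hweight.
have -> : [set k | (x *m M) ord0 k != 0] = s @: [set i | x ord0 i != 0].
  apply/setP => k; have /codomP [i ->] := injF_onto inj k.
  by rewrite inE entry mem_imset // inE mulf_eq0 negb_or (cnz i) andbT.
by rewrite card_imset.
Qed.


Section P.
Variable F : finFieldType.
Variables (nu n : nat) (Fam : {set 'rV[F]_n}) (P : 'M[F]_(nu, n)).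
Hypothesis pf : parent_fun Fam P.

Lemma same_line : {in Fam &, forall u v, v \in <[u]>%VS -> v = u}.
Proof.
case: pf => [[_ Hfree _] _ _ _] u v uF vF h.
apply/eqP; apply: contraT => nvu.
by have := Hfree v u vF uF nvu; rewrite free_cons span_seq1 h.
Qed.

Lemma parent_f : exists f : 'I_nu -> 'rV[F]_n,
  forall i, f i \in Fam /\ <[row i P]>%VS = <[f i]>%VS.
Proof.
case: pf => _ _ Hrow _.
apply: (@fin_ex _ _ (fun i v => v \in Fam /\ <[row i P]>%VS = <[v]>%VS)) => i.
by have [v ? ?] := Hrow i; exists v.
Qed.

Lemma parent_rows :
  (forall i, row i P != 0) /\ (forall i j, row j P \in <[row i P]>%VS -> j = i).
Proof.
have [f Hf] := parent_f.
case: pf => [[Fam0 _ _] Hcard _ Hfam].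
have finj : injective f.
  have sub : Fam \subset f @: 'I_nu.
    apply/subsetP => v vF; have [k hk] := Hfam v vF.
    have : v \in <[f k]>%VS by rewrite -(Hf k).2 hk memv_line.
    move/(same_line (Hf k).1 vF) => ->; exact: imset_f.
  have := subset_leq_card sub; rewrite Hcard => h.
  have h2 := leq_imset_card f 'I_nu.
  have : #|f @: 'I_nu| == #|'I_nu|.
    by rewrite eqn_leq h2 card_ord h.
  move/imset_injP => inj x y e; exact: inj.
split.
  move=> i; apply/eqP => h0.
  have : f i \in <[row i P]>%VS by rewrite (Hf i).2 memv_line.
  rewrite h0 => /vlineP [k]; rewrite scaler0 => e.
  by have := (Hf i).1; rewrite e (negbTE Fam0).
move=> i j h; apply: finj.
have : f j \in <[row i P]>%VS.
  have : f j \in <[row j P]>%VS by rewrite (Hf j).2 memv_line.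
  by apply: subvP; rewrite -memvE.
rewrite (Hf i).2; exact: (same_line (Hf i).1 (Hf j).1).
Qed.

Lemma pw_upper (x : 'rV[F]_nu) : (pweight Fam (x *m P) <= hweight x)%N.
Proof.
have [f Hf] := parent_f.
set S := [set i | x ord0 i != 0].
rewrite /pweight -minEnat.
rewrite -Order.NatOrder.leEnat; apply: (@Order.TotalTheory.bigmin_inf _ _ _ _ (f @: S)).
  apply/andP; split.
    by apply/subsetP => v /imsetP [i _ ->]; exact: (Hf i).1.
  rewrite mulmx_sum_row; apply: memv_suml => i _.
  case: (eqVneq (x 0 i) 0) => [->|nz]; first by rewrite scale0r mem0v.
  apply: memvZ.
  have : row i P \in <[f i]>%VS by rewrite -(Hf i).2 memv_line.
  apply: subvP; rewrite -memvE; apply: memv_span; rewrite mem_enum.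
  by apply: imset_f; rewrite inE.
exact: leq_imset_card.
Qed.

Lemma pw_lower (y : 'rV[F]_n) : exists2 x, x *m P = y & (hweight x <= pweight Fam y)%N.
Proof.
case: pf => [[_ _ Hspan] _ _ Hfam].
have [I /andP[IF yI] HI] : exists2 I : {set 'rV[F]_n},
    (I \subset Fam) && (y \in <<enum I>>%VS) & (#|I| <= pweight Fam y)%N.
  rewrite /pweight; apply: (big_ind (fun z => exists2 I : {set 'rV[F]_n},
    (I \subset Fam) && (y \in <<enum I>>%VS) & (#|I| <= z)%N)).
  - by exists Fam => //; rewrite subxx Hspan memvf.
  - move=> a b [I1 h1 l1] [I2 h2 l2].
    case: (leqP a b) => hab.
      by exists I1.
    by exists I2.
  - by move=> I h; exists I.
have [g Hg] : exists g : 'rV[F]_n -> 'rV[F]_nu,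
    forall v, v \in Fam -> g v *m P = v /\ (hweight (g v) <= 1)%N.
  apply: (@fin_ex _ _ (fun v w => v \in Fam -> w *m P = v /\ (hweight w <= 1)%N)) => v; case: (boolP (v \in Fam)) => vF; last by exists 0.
  have [k hk] := Hfam v vF.
  have : v \in <[row k P]>%VS by rewrite hk memv_line.
  move/vlineP => [c ->]; exists (c *: 'e_k) => _; split.
    by rewrite -scalemxAl -rowE.
  by apply: leq_trans (hwZ _ _) _; rewrite hw_delta.
set X := in_tuple (enum I).
have yX : y \in <<X>>%VS by [].
have XF : forall k : 'I_(size (enum I)), X`_k \in Fam.
  move=> k; have : X`_k \in enum I by apply: mem_nth; exact: ltn_ord.
  by rewrite mem_enum; apply: (subsetP IF).
exists (\sum_k coord X k y *: g X`_k).
  rewrite mulmx_suml {2}(coord_span yX); apply: eq_bigr => k _.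
  by rewrite -scalemxAl (Hg _ (XF k)).1.
apply: leq_trans; first exact: hw_sum.
apply: leq_trans HI.
apply: (@leq_trans (\sum_(k < size (enum I)) 1)%N).
  apply: leq_sum => k _; apply: leq_trans (hwZ _ _) _; exact: (Hg _ (XF k)).2.
by rewrite sum1_card card_ord cardE.
Qed.

Lemma parent_rinv : exists R : 'M[F]_(n, nu), R *m P = 1%:M.
Proof.
have [xf Hx] : exists xf : 'I_n -> 'rV[F]_nu, forall k, xf k *m P = row k 1%:M.
  apply: (@fin_ex _ _ (fun k x => x *m P = row k 1%:M)) => k; have [x hx _] := pw_lower (row k 1%:M); by exists x.
exists (\matrix_k xf k); apply/row_matrixP => k.
by rewrite row_mul rowK Hx.
Qed.

End P.


Section M.
Variable F : finFieldType.
Variables (nu n m : nat) (FamV : {set 'rV[F]_n}) (FamW : {set 'rV[F]_m}).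
Variables (PV : 'M[F]_(nu, n)) (PW : 'M[F]_(nu, m)).
Hypotheses (pV : parent_fun FamV PV) (pW : parent_fun FamW PW).

Lemma hiso_unit (Lh : 'M[F]_nu) : hamming_isom Lh -> Lh \in unitmx.
Proof. by case/andP. Qed.

Lemma hiso_w (Lh : 'M[F]_nu) x : hamming_isom Lh -> hweight (x *m Lh) = hweight x.
Proof. by case/andP => _ /forallP /(_ x) /eqP. Qed.

Lemma uniqL (L1 L2 : 'M[F]_(n, m)) : PV *m L1 = PV *m L2 -> L1 = L2.
Proof.
have [R HR] := parent_rinv pV => e.
by rewrite -(mul1mx L1) -(mul1mx L2) -HR -!mulmxA e.
Qed.

Lemma isom_of (Lh : 'M[F]_nu) (L : 'M[F]_(n, m)) :
  Hset PV PW Lh -> PV *m L = Lh *m PW -> proj_isom FamV FamW L.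
Proof.
case/andP => hL /eqP Himg EqL.
have Lu := hiso_unit hL.
have kerV : forall x : 'rV[F]_nu, x *m Lh *m PW = 0 -> x *m PV = 0.
  move=> x h; have : x *m Lh \in pcode PW by rewrite inE h.
  rewrite -Himg => /imsetP [x' x'in e].
  have -> : x = x' by apply: (can_inj (mulmxK Lu)).
  by move: x'in; rewrite inE => /eqP.
have [RV HRV] := parent_rinv pV.
have [RW HRW] := parent_rinv pW.
have inj : forall y : 'rV[F]_n, y *m L = 0 -> y = 0.
  move=> y h; have ey : y = (y *m RV) *m PV by rewrite -mulmxA HRV mulmx1.
  rewrite ey; apply: kerV; by rewrite -mulmxA -EqL mulmxA -ey.
apply/and3P; split.
- exact: inj_row_free.
- apply/row_fullP; exists (RW *m invmx Lh *m PV).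
  by rewrite -!mulmxA EqL (mulmxA (invmx Lh)) mulVmx // mul1mx.
- apply/forallP => y; apply/eqP; apply/anti_leq/andP; split.
  + have [x Hx Hw] := pw_lower pV y.
    rewrite -Hx -mulmxA EqL mulmxA.
    apply: leq_trans (pw_upper pW _) _; by rewrite hiso_w // Hx.
  + have [z Hz Hw] := pw_lower pW (y *m L).
    set x := z *m invmx Lh.
    have xz : x *m Lh = z by rewrite mulmxKV.
    have xy : x *m PV = y.
      apply/eqP; rewrite -subr_eq0; apply/eqP/inj.
      by rewrite mulmxBl -mulmxA EqL mulmxA xz Hz subrr.
    rewrite -{1}xy; apply: leq_trans (pw_upper pV _) _.
    apply: leq_trans Hw; by rewrite -xz hiso_w.
Qed.

Lemma existsL (Lh : 'M[F]_nu) : Hset PV PW Lh -> exists L, PV *m L = Lh *m PW.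
Proof.
case/andP => hL /eqP Himg.
have imV : forall x : 'rV[F]_nu, x *m PV = 0 -> x *m Lh *m PW = 0.
  move=> x h; have : x *m Lh \in pcode PW by rewrite -Himg; apply: imset_f; rewrite inE h.
  by rewrite inE => /eqP.
have [RV HRV] := parent_rinv pV.
exists (RV *m Lh *m PW).
rewrite !mulmxA; apply/eqP; rewrite -subr_eq0 -{2}(mul1mx Lh) -!mulmxBl.
apply/eqP/row_matrixP => i; rewrite row0 !row_mul; apply: imV.
by rewrite -row_mul mulmxBl mul1mx -mulmxA HRV mulmx1 subrr row0.
Qed.

Lemma Phi_spec (Lh : 'M[F]_nu) (L : 'M[F]_(n, m)) :
  proj_isom FamV FamW L -> PV *m L = Lh *m PW ->
  [/\ proj_isom FamV FamW (Phi FamV FamW PV PW Lh),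
      PV *m Phi FamV FamW PV PW Lh = Lh *m PW & Phi FamV FamW PV PW Lh = L].
Proof.
move=> iL eL; rewrite /Phi; case: pickP => [L' /andP[i' /eqP e'] | none] /=.
  by split => //; apply: uniqL; rewrite e' eL.
by have := none L; rewrite iL eL eqxx.
Qed.

End M.


Section S.
Variable F : finFieldType.
Variables (nu n m : nat) (FamV : {set 'rV[F]_n}) (FamW : {set 'rV[F]_m}).
Variables (PV : 'M[F]_(nu, n)) (PW : 'M[F]_(nu, m)).
Hypotheses (pV : parent_fun FamV PV) (pW : parent_fun FamW PW).

Lemma mono_cancel (Lh Lh' : 'M[F]_nu) :
  hamming_isom Lh -> hamming_isom Lh' -> Lh *m PW = Lh' *m PW -> Lh = Lh'.
Proof.
move=> hL hL' e.
have [Pnz Pind] := parent_rows pW.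
have mono : forall M : 'M[F]_nu, hamming_isom M -> forall i,
    exists j, exists c, c != 0 /\ row i M = c *: 'e_j.
  move=> M hM i; have h : hweight (row i M) = 1%N by rewrite rowE hiso_w // hw_delta.
  case: (hw_le1 (eq_leq h)) => [e0|[j [nz e0]]]; first by rewrite e0 hw0 in h.
  by exists j, (row i M ord0 j).
apply/row_matrixP => i.
have [j [c [cnz ej]]] := mono _ hL i; have [j' [c' [cnz' ej']]] := mono _ hL' i.
have : row i (Lh *m PW) = row i (Lh' *m PW) by rewrite e.
rewrite !row_mul ej ej' -!scalemxAl -!rowE => h.
have jj : j' = j.
  apply: Pind; apply/vlineP; exists (c'^-1 * c).
  by rewrite -scalerA h scalerA mulVf // scale1r.
subst j'.
have : (c - c') *: row j PW = 0 by rewrite scalerBl h subrr.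
move/eqP; rewrite scaler_eq0 (negbTE (Pnz j)) orbF subr_eq0 => /eqP cc.
by rewrite cc.
Qed.

Lemma surjL (L : 'M[F]_(n, m)) : proj_isom FamV FamW L ->
  exists Lh, Hset PV PW Lh /\ PV *m L = Lh *m PW.
Proof.
case/and3P => Lfree _ /forallP Lw.
have Lw' : forall y, pweight FamW (y *m L) = pweight FamV y by move=> y; apply/eqP.
have [Pnz Pind] := parent_rows pV.
have inj : forall y : 'rV[F]_n, y *m L = 0 -> y = 0 by move=> y; exact: row_free_inj0.
have [zf Hz] : exists zf : 'I_nu -> 'rV[F]_nu,
    forall i, zf i *m PW = row i PV *m L /\ (hweight (zf i) <= 1)%N.
  apply: (@fin_ex _ _ (fun i z => z *m PW = row i PV *m L /\ (hweight z <= 1)%N)) => i.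
  have [z hz hw] := pw_lower pW (row i PV *m L).
  exists z; split => //; apply: leq_trans hw _; rewrite Lw' rowE.
  by apply: leq_trans (pw_upper pV _) _; rewrite hw_delta.
have [s Hs] : exists s : 'I_nu -> 'I_nu,
    forall i, zf i ord0 (s i) != 0 /\ zf i = zf i ord0 (s i) *: 'e_(s i).
  apply: (@fin_ex _ _ (fun i j => zf i ord0 j != 0 /\ zf i = zf i ord0 j *: 'e_j)) => i.
  case: (hw_le1 (Hz i).2) => [e|[j hj]]; last by exists j.
  have := (Hz i).1; rewrite e mul0mx => /esym /inj /eqP.
  by rewrite (negbTE (Pnz i)).
set Lh := \matrix_i zf i.
have EqL : PV *m L = Lh *m PW.
  by apply/row_matrixP => i; rewrite !row_mul rowK (Hz i).1.
have sinj : injective s.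
  move=> i j e.
  have [cinz ei] := Hs i; have [cjnz ej] := Hs j.
  move: (zf i ord0 (s i)) (zf j ord0 (s j)) cinz cjnz ei ej => ci cj cinz cjnz ei ej.
  have hz : zf i = (ci / cj) *: zf j by rewrite ej scalerA divfK // ei e.
  have : (row i PV - (ci / cj) *: row j PV) *m L = 0.
    by rewrite mulmxBl -scalemxAl -(Hz i).1 -(Hz j).1 hz -scalemxAl subrr.
  move/inj/eqP; rewrite subr_eq0 => /eqP hr.
  by apply: Pind; apply/vlineP; exists (ci / cj).
have Lhw : forall x, hweight (x *m Lh) = hweight x.
  apply: (mono_w (c := fun i => zf i ord0 (s i)) sinj) => i.
    exact: (Hs i).1.
  by rewrite rowK -(Hs i).2.
have Lhu : Lh \in unitmx.
  rewrite -row_free_unit; apply: inj_row_free => z hz; apply: hw_eq0.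
  by rewrite -Lhw hz hw0.
have hL : hamming_isom Lh.
  by rewrite /hamming_isom Lhu; apply/forallP => x; rewrite Lhw.
have Himg : [set x *m Lh | x in pcode PV] = pcode PW.
  apply/setP => y; rewrite [in RHS]inE; apply/imsetP/eqP => [[x xin ->] | hy].
    by move: xin; rewrite inE => /eqP hx; rewrite -mulmxA -EqL mulmxA hx mul0mx.
  exists (y *m invmx Lh); last by rewrite mulmxKV.
  rewrite inE; apply/eqP/inj.
  by rewrite -(mulmxA (y *m invmx Lh)) EqL mulmxA mulmxKV // hy.
exists Lh; split => //.
by rewrite /Hset hL Himg eqxx.
Qed.

Lemma specH (Lh : 'M[F]_nu) : Hset PV PW Lh ->
  proj_isom FamV FamW (Phi FamV FamW PV PW Lh) /\
  PV *m Phi FamV FamW PV PW Lh = Lh *m PW.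
Proof.
move=> hLh; have [L eL] := existsL pV hLh.
have iL := isom_of pV pW hLh eL.
by have [i1 e1 _] := Phi_spec pV iL eL.
Qed.

End S.

Lemma isom_comp (F : finFieldType) n1 n2 n3 (F1 : {set 'rV[F]_n1}) (F2 : {set 'rV[F]_n2})
  (F3 : {set 'rV[F]_n3}) (A : 'M[F]_(n1, n2)) (B : 'M[F]_(n2, n3)) :
  proj_isom F1 F2 A -> proj_isom F2 F3 B -> proj_isom F1 F3 (A *m B).
Proof.
case/and3P => fA /row_fullP [XA HA] /forallP wA.
case/and3P => fB /row_fullP [XB HB] /forallP wB.
apply/and3P; split.
- apply: inj_row_free => z h; apply: (row_free_inj0 fA); apply: (row_free_inj0 fB).
  by rewrite -mulmxA.
- apply/row_fullP; exists (XB *m XA).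
  by rewrite mulmxA -(mulmxA XB) HA mulmx1 HB.
- by apply/forallP => x; rewrite mulmxA (eqP (wB _)) (eqP (wA _)).
Qed.

Theorem theorem4p1 (F : finFieldType) (nu : nat) :
  (* (a) and (c) *)
  (forall (n m : nat) (FamV : {set 'rV[F]_n}) (FamW : {set 'rV[F]_m})
          (PV : 'M[F]_(nu, n)) (PW : 'M[F]_(nu, m)),
     parent_fun FamV PV -> parent_fun FamW PW ->
     let Ph := Phi FamV FamW PV PW in
     (* (a) existence and uniqueness *)
     [/\ (forall Lh, Hset PV PW Lh ->
            [/\ proj_isom FamV FamW (Ph Lh), PV *m Ph Lh = Lh *m PW &
                forall L, proj_isom FamV FamW L -> PV *m L = Lh *m PW ->
                  L = Ph Lh]),
         (* (a) Phi is a bijection H(P_V,P_W) -> Isom(V,W) *)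
         {in Hset PV PW &, injective Ph},
         (forall L, proj_isom FamV FamW L ->
            exists2 Lh, Hset PV PW Lh & Ph Lh = L) &
         (* (c) restriction to subspaces *)
         forall (DV : {vspace 'rV[F]_n}) (DW : {vspace 'rV[F]_m}),
           let HD := fun Lh => Hset PV PW Lh &&
                      ((fun x => x *m Lh) @: parent_preim PV DV == parent_preim PW DW) in
           let ID := fun L => proj_isom FamV FamW L && (sub_image L DV == [set y | y \in DW]) in
           [/\ (forall Lh, HD Lh -> ID (Ph Lh)),
               {in HD &, injective Ph} &
               (forall L, ID L -> exists2 Lh, HD Lh & Ph Lh = L)]]) /\
  (* (b) compatibility with composition *)
  (forall (n1 n2 n3 : nat) (F1 : {set 'rV[F]_n1}) (F2 : {set 'rV[F]_n2})
          (F3 : {set 'rV[F]_n3})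
          (P1 : 'M[F]_(nu, n1)) (P2 : 'M[F]_(nu, n2)) (P3 : 'M[F]_(nu, n3))
          (Lh Th : 'M[F]_nu),
     parent_fun F1 P1 -> parent_fun F2 P2 -> parent_fun F3 P3 ->
     Hset P1 P2 Lh -> Hset P2 P3 Th ->
     Phi F1 F3 P1 P3 (Lh *m Th) = Phi F1 F2 P1 P2 Lh *m Phi F2 F3 P2 P3 Th).
Proof.
split.
  move=> n m FamV FamW PV PW pV pW Ph; rewrite /Ph.
  have inj : {in Hset PV PW &, injective Ph}.
    move=> Lh Lh' h1 h2 e.
    have [_ e1] := specH pV pW h1; have [_ e2] := specH pV pW h2.
    apply: (mono_cancel pW (andP h1).1 (andP h2).1).
    by rewrite -e1 -e2; congr (PV *m _); exact: e.
  have [RV HRV] := parent_rinv pV.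
  have [RW HRW] := parent_rinv pW.
  split.
  - move=> Lh hLh; have [iL eL] := specH pV pW hLh.
    split => // L iL' eL'.
    by have [_ _ ->] := Phi_spec pV iL' eL'.
  - exact: inj.
  - move=> L iL; have [Lh [hLh eL]] := surjL pV pW iL.
    exists Lh => //; by have [_ _ ->] := Phi_spec pV iL eL.
  - move=> DV DW; split.
    + move=> Lh /andP[hLh /eqP Hpre].
      have [iL eL] := specH pV pW hLh.
      rewrite iL /=; apply/eqP/setP => y; rewrite [in RHS]inE /sub_image.
      apply/imsetP/idP => [[v vin ->]|yin].
        move: vin; rewrite inE => vin.
        have xin : v *m RV \in parent_preim PV DV.
          by rewrite inE -mulmxA HRV mulmx1.
        have : v *m RV *m Lh \in parent_preim PW DW by rewrite -Hpre; apply: imset_f.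
        rewrite inE -mulmxA -eL mulmxA -(mulmxA v) HRV mulmx1.
        by [].
      have zin : y *m RW \in parent_preim PW DW by rewrite inE -mulmxA HRW mulmx1.
      move: zin; rewrite -Hpre => /imsetP [x xin ex].
      exists (x *m PV); first by rewrite inE; move: xin; rewrite inE.
      by rewrite -mulmxA eL mulmxA -ex -mulmxA HRW mulmx1.
    + move=> Lh Lh' /andP[h1 _] /andP[h2 _]; exact: inj.
    + move=> L /andP[iL /eqP Him].
      have [Lh [hLh eL]] := surjL pV pW iL.
      have Lu := hiso_unit (andP hLh).1.
      have Linj : forall y : 'rV[F]_n, y *m L = 0 -> y = 0.
        by move=> y; apply: row_free_inj0; case/and3P: iL.
      exists Lh; last by have [_ _ ->] := Phi_spec pV iL eL.
      rewrite hLh /=; apply/eqP/setP => y.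
      apply/imsetP/idP => [[x xin ->]|yin].
        move: xin; rewrite !inE => xin.
        rewrite -mulmxA -eL mulmxA.
        have : x *m PV *m L \in sub_image L DV by apply: imset_f; rewrite inE.
        by rewrite Him inE.
      move: yin; rewrite inE => yin.
      have : y *m PW \in [set y0 | y0 \in DW] by rewrite inE.
      rewrite -Him => /imsetP [v vin ev].
      exists (y *m invmx Lh); last by rewrite mulmxKV.
      have : (y *m invmx Lh *m PV - v) *m L = 0.
        by rewrite mulmxBl -(mulmxA (y *m invmx Lh)) eL mulmxA mulmxKV // ev subrr.
      move/Linj/eqP; rewrite subr_eq0 => /eqP e'.
      by rewrite inE e'; move: vin; rewrite inE.
move=> n1 n2 n3 F1 F2 F3 P1 P2 P3 Lh Th p1 p2 p3 h1 h2.
have [i12 e12] := specH p1 p2 h1; have [i23 e23] := specH p2 p3 h2.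
have icomp := isom_comp i12 i23.
have ecomp : P1 *m (Phi F1 F2 P1 P2 Lh *m Phi F2 F3 P2 P3 Th) = (Lh *m Th) *m P3.
  by rewrite mulmxA e12 -mulmxA e23 mulmxA.
by have [_ _ ->] := Phi_spec p1 icomp ecomp.
Qed.
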